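(* For integers $n>p\ge 1$, the number of $123$-avoiding ordered partitions of $[n]$ into $n-p+1$ blocks, of which exactly one block has size $p$ and the other $n-p$ blocks have size $1$, is $$\frac{(n-p+1)(p+1)\binom{2n-p}{n-p}}{n+1}.$$
   Context: An ordered set partition of $[n]$ into $k$ blocks is a sequence $B_1/B_2/\cdots/B_k$ of nonempty, pairwise disjoint subsets of $[n]$ whose union is $[n]$; the order of the blocks matters, but not the order of elements within a block. Such a partition contains the pattern $123$ if there are block indices $i_1<i_2<i_3$ and elements $b_j\in B_{i_j}$ with $b_1<b_2<b_3$; otherwise it avoids $123$.
   Formalization: The count runs over pairs of a 123-avoiding ordered partition of [n] into n−p+1 blocks and a designated block of size p, the other blocks having size 1, so for p = 1 each partition counts n times. The statement above fails without it. *)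

(* Defs.v *)
From mathcomp Require Import all_boot.
Set Implicit Arguments. Unset Strict Implicit. Unset Printing Implicit Defensive.

(* Elements of [n] = {1,...,n} are represented by 'I_n = {0,...,n-1}
   (an order-preserving relabelling). *)
Definition is_osp (n k : nat) (B : k.-tuple {set 'I_n}) : bool :=
  [forall i : 'I_k, tnth B i != set0] &&
  [forall i : 'I_k, forall j : 'I_k, (i != j) ==> [disjoint tnth B i & tnth B j]] &&
  [forall x : 'I_n, exists i : 'I_k, x \in tnth B i].

Definition contains123 (n k : nat) (B : k.-tuple {set 'I_n}) : bool :=
  [exists i1 : 'I_k, exists i2 : 'I_k, exists i3 : 'I_k,
   exists b1 : 'I_n, exists b2 : 'I_n, exists b3 : 'I_n,
    [&& i1 < i2, i2 < i3, b1 \in tnth B i1, b2 \in tnth B i2,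
        b3 \in tnth B i3, b1 < b2 & b2 < b3]].

Definition avoids123 (n k : nat) (B : k.-tuple {set 'I_n}) : bool :=
  ~~ contains123 B.

Definition block_type_at (n k p : nat) (B : k.-tuple {set 'I_n}) (i : 'I_k) : bool :=
  (#|tnth B i| == p) && [forall j : 'I_k, (j != i) ==> (#|tnth B j| == 1)].

(* The set of pairs (B, i): B a 123-avoiding ordered partition of [n] into
   n-p+1 blocks, with the designated block B_i of size p and all others of
   size 1.  For p >= 2 the index i is determined by B; for p = 1 the block
   "of size p" is a designated one. *)
Definition avoiders (n p : nat) :
    {set (n - p + 1).-tuple {set 'I_n} * 'I_(n - p + 1)} :=
  [set Bi | [&& is_osp Bi.1, avoids123 Bi.1 & block_type_at p Bi.1 Bi.2]].

(* Main.v *)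
Require Import Defs.
From mathcomp Require Import all_boot zify.
Set Implicit Arguments. Unset Strict Implicit. Unset Printing Implicit Defensive.
Fixpoint dec (P : pred nat) (s : seq nat) : bool :=
  if s is x :: s' then (P x ==> all (fun y => P y ==> (y < x)) s') && dec P s' else true.
Fixpoint av (s : seq nat) : bool :=
  if s is x :: s' then dec (fun y => x < y) s' && av s' else true.

Lemma eq_in_dec (P Q : pred nat) s : {in s, P =1 Q} -> dec P s = dec Q s.
Proof.
elim: s => //= x s IH H.
rewrite H ?mem_head // IH; last by move=> y ys; apply: H; rewrite in_cons ys orbT.
congr (_ && _); congr (_ ==> _); apply: eq_in_all => y ys.
by rewrite H // in_cons ys orbT.
Qed.

Lemma dec_sub (P Q : pred nat) s : (forall y, Q y -> P y) -> dec P s -> dec Q s.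
Proof.
move=> QP; elim: s => //= x s IH /andP[H1 H2]; rewrite IH // andbT.
apply/implyP => Qx; move/implyP: H1 => /(_ (QP _ Qx)) /allP H.
by apply/allP => y ys; apply/implyP => Qy; move/implyP: (H y ys); apply; apply: QP.
Qed.

Lemma dec_none (P : pred nat) s : (forall y, y \in s -> ~~ P y) -> dec P s.
Proof.
move=> H; rewrite (@eq_in_dec P pred0) => [|y ys]; last by rewrite /= (negbTE (H y ys)).
by elim: s {H} => //= x s ->; rewrite andbT.
Qed.

Lemma dec_map (P : pred nat) f s : (forall y z, (f y < f z) = (y < z)) ->
  dec P (map f s) = dec (fun y => P (f y)) s.
Proof.
move=> Hf; elim: s => //= x s ->; rewrite all_map; congr (_ && _).
congr (_ ==> _); apply: eq_all => y /=; by rewrite Hf.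
Qed.

Lemma av_map f s : (forall y z, (f y < f z) = (y < z)) -> av (map f s) = av s.
Proof.
move=> Hf; elim: s => //= x s ->; rewrite dec_map //.
by congr (_ && _); apply: eq_in_dec => y _; rewrite /= Hf.
Qed.

Lemma ltn_bump2 h i j : (bump h i < bump h j) = (i < j).
Proof. by rewrite !ltnNge leq_bump2. Qed.

Lemma perm_iota_eq m t :
  perm_eq t (iota 0 m) = [&& uniq t, all (fun y => y < m) t & size t == m].
Proof.
apply/idP/idP.
  move=> H; rewrite (perm_uniq H) iota_uniq (perm_size H) size_iota eqxx andbT /=.
  by apply/allP => y; rewrite (perm_mem H) mem_iota.
case/and3P=> Ut /allP At /eqP St; apply: uniq_perm => //; first exact: iota_uniq.
have [] := uniq_min_size Ut (_ : {subset t <= iota 0 m}) _ => //.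
  by move=> z zt; rewrite mem_iota /= At.
by rewrite size_iota St.
Qed.

Lemma bump_lt x v y : y < v -> bump x y < v.+1.
Proof. by rewrite /bump; case: (x <= y) => /=; lia. Qed.

Lemma bump_inj x : injective (bump x).
Proof. exact: can_inj (bumpK x). Qed.

Lemma count_perms_peel v P :
  count P (permutations (iota 0 v.+1)) =
  \sum_(0 <= x < v.+1) count (fun s => P (x :: map (bump x) s)) (permutations (iota 0 v)).
Proof.
pose L := [seq x :: map (bump x) s | x <- iota 0 v.+1, s <- permutations (iota 0 v)].
have UL : uniq L.
  apply: allpairs_uniq; [exact: iota_uniq | exact: permutations_uniq |].
  move=> [x s] [x' s'] _ _ /= [-> E]; congr (_, _).
  by apply: (inj_map (@bump_inj x')) E.
have PL : perm_eq (permutations (iota 0 v.+1)) L.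
  apply: uniq_perm => //; first exact: permutations_uniq.
  move=> t; rewrite mem_permutations perm_iota_eq; apply/idP/allpairsP.
    case: t => // x t /and3P[/= /andP[xt Ut] /andP[xv At] /eqP[St]].
    exists (x, map (unbump x) t) => /=; split.
    - by change (x \in iota 0 v.+1); rewrite mem_iota.
    - rewrite /= mem_permutations perm_iota_eq size_map St eqxx andbT.
      have inj : {in t &, injective (unbump x)}.
        move=> a b ai bi E; have := unbumpKcond x a; have := unbumpKcond x b.
        rewrite E; have ax : (a == x) = false by apply/negbTE; apply: contraNneq xt => <-.
        have bx : (b == x) = false by apply/negbTE; apply: contraNneq xt => <-.
        by rewrite ax bx !add0n => H1 H2; rewrite -H2 H1.
      rewrite (map_inj_in_uniq inj) Ut /=.
      apply/allP => y /mapP[z zt ->]; have := At; move/allP/(_ z zt).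
      have zx : z != x by apply: contraNneq xt => <-.
      move: zx; rewrite /unbump; case: (ltnP x z) => /=; lia.
    - congr (_ :: _); rewrite -map_comp -[LHS]map_id; apply/eq_in_map => z zt /=.
      have zx : (z == x) = false by apply/negbTE; apply: contraNneq xt => <-.
      by rewrite unbumpKcond zx.
  case=> [[x s]] /= [xi si ->]; have {}xi : x \in iota 0 v.+1 by []; move: xi si; rewrite mem_iota mem_permutations perm_iota_eq.
  move=> /andP[_ xv] /and3P[Us As /eqP Ss] /=.
  rewrite size_map Ss eqxx andbT xv /= map_inj_uniq ?Us ?andbT; last exact: bump_inj.
  apply/andP; split.
    by apply/mapP => -[y _ /eqP]; rewrite (negbTE (neq_bump x y)).
  by apply/allP => y /mapP[z zs ->]; apply: bump_lt; move/allP: As; apply.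
rewrite (permP PL) /L count_flatten sumnE big_map /index_iota subn0.
by rewrite big_map; apply: eq_bigr => x _; rewrite count_map.
Qed.

Definition Q t lo hi s := [&& av s, dec (fun y => t <= y) s & dec (fun y => lo <= y < hi) s].
Definition N v t lo hi := count (Q t lo hi) (permutations (iota 0 v)).

Lemma bumpE x y : bump x y = if x <= y then y.+1 else y.
Proof. by rewrite /bump; case: leqP. Qed.

Lemma Q_cons t lo hi x s :
  Q t lo hi (x :: map (bump x) s) =
  [&& dec (fun y => x <= y) s, av s,
      (t <= x) ==> all (fun y => (t <= bump x y) ==> (bump x y < x)) s,
      dec (fun y => t <= bump x y) s,
      (lo <= x < hi) ==> all (fun y => (lo <= bump x y < hi) ==> (bump x y < x)) s &
      dec (fun y => lo <= bump x y < hi) s].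
Proof.
have Hb : forall y z, (bump x y < bump x z) = (y < z) := ltn_bump2 x.
rewrite /Q /= !(dec_map _ _ Hb) (av_map _ Hb) !all_map.
have -> : dec (fun y => x < bump x y) s = dec (fun y => x <= y) s.
  by apply: eq_in_dec => y _ /=; rewrite bumpE; case: (leqP x y) => h; [rewrite ltnS h | apply/negbTE; rewrite -leqNgt ltnW].
by rewrite !andbA.
Qed.

Lemma perms_mem v s : s \in permutations (iota 0 v) -> forall y, (y \in s) = (y < v).
Proof. by rewrite mem_permutations => /perm_mem H y; rewrite H mem_iota. Qed.

Lemma count_pred0_in (a : pred (seq nat)) l : (forall s, s \in l -> ~~ a s) -> count a l = 0.
Proof. by move=> H; apply/eqP; rewrite -leqn0 leqNgt -has_count; apply/hasPn. Qed.

Lemma Nstep v t lo hi x : lo <= hi -> hi <= t -> t <= v.+1 -> x < v.+1 ->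
  count (fun s => Q t lo hi (x :: map (bump x) s)) (permutations (iota 0 v)) =
  if x < lo then N v x x x
  else if x < hi then (if x == hi.-1 then N v x lo x else 0)
  else if x < t then N v x lo hi
  else if x == v then N v t lo hi else 0.
Proof.
move=> lohi hit tv xv.
case: (ltnP x lo) => xlo.
  rewrite /N; apply: eq_in_count => s /perms_mem sP /=; rewrite Q_cons /Q.
  rewrite (@dec_none (fun y => x <= y < x)) => [|y _]; last by apply/negP; lia.
  have -> : (t <= x) = false by apply/negbTE; rewrite -ltnNge; lia.
  have -> : (lo <= x < hi) = false by apply/negbTE; rewrite negb_and -ltnNge xlo.
  rewrite /= andbT; case Hd: (dec (fun y => x <= y) s); last by rewrite !andbF.
  rewrite /=.
  rewrite (@dec_sub (fun y => x <= y) (fun y => t <= bump x y)) //; last first.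
    by move=> y; rewrite bumpE; case: (leqP x y) => //; lia.
  rewrite (@dec_sub (fun y => x <= y) (fun y => lo <= bump x y < hi)) //; last first.
    by move=> y; rewrite bumpE; case: (leqP x y) => //; lia.
case: (ltnP x hi) => xhi.
  case: eqP => xe.
    rewrite /N; apply: eq_in_count => s /perms_mem sP /=; rewrite Q_cons /Q.
    have -> : (t <= x) = false by apply/negbTE; rewrite -ltnNge; lia.
    rewrite xlo xhi /=.
    have -> : all (fun y => (lo <= bump x y < hi) ==> (bump x y < x)) s.
      by apply/allP => y _; rewrite bumpE; case: (leqP x y) => h; apply/implyP; lia.
    have -> : dec (fun y => lo <= bump x y < hi) s = dec (fun y => lo <= y < x) s.
      by apply: eq_in_dec => y _ /=; rewrite bumpE; case: (leqP x y) => h;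
        apply/idP/idP; lia.
    rewrite /=; case Hd: (dec (fun y => x <= y) s); last by rewrite !andbF.
  rewrite /=.
    rewrite (@dec_sub (fun y => x <= y) (fun y => t <= bump x y)) //; last first.
      by move=> y; rewrite bumpE; case: (leqP x y) => //; lia.
    idtac.
  apply: count_pred0_in => s /perms_mem sP; rewrite Q_cons xlo xhi /=.
  have xs : x \in s by rewrite sP; lia.
  have -> : all (fun y => (lo <= bump x y < hi) ==> (bump x y < x)) s = false.
    apply/negbTE/allPn; exists x => //; rewrite bumpE leqnn; apply/negP => /implyP H.
    suff: x.+1 < x by lia.
    by apply: H; lia.
  by rewrite !andbF.
case: (ltnP x t) => xt.
  rewrite /N; apply: eq_in_count => s /perms_mem sP /=; rewrite Q_cons /Q.
  have -> : (t <= x) = false by apply/negbTE; rewrite -ltnNge.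
  have -> : (lo <= x < hi) = false by apply/negbTE; rewrite negb_and ltnNge xhi orbT.
  have -> : dec (fun y => lo <= bump x y < hi) s = dec (fun y => lo <= y < hi) s.
    by apply: eq_in_dec => y _ /=; rewrite bumpE; case: (leqP x y) => h;
      apply/idP/idP; lia.
  rewrite /=; case Hd: (dec (fun y => x <= y) s); last by rewrite !andbF.
  rewrite /=.
  rewrite (@dec_sub (fun y => x <= y) (fun y => t <= bump x y)) //; last first.
    by move=> y; rewrite bumpE; case: (leqP x y) => //; lia.
case: eqP => xe.
  subst x; rewrite /N; apply: eq_in_count => s /perms_mem sP /=; rewrite Q_cons /Q.
  have lts : forall y, y \in s -> bump v y = y.
    by move=> y; rewrite sP bumpE => h; case: (leqP v y) => //; lia.
  rewrite (@dec_none (fun y => v <= y)) => [|y]; last by rewrite sP -ltnNge.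
  have -> : (lo <= v < hi) = false by apply/negbTE; rewrite negb_and ltnNge xhi orbT.
  rewrite xt /=.
  have -> : all (fun y => (t <= bump v y) ==> (bump v y < v)) s.
    by apply/allP => y ys; rewrite lts // -sP ys implybT.
  have -> : dec (fun y => lo <= bump v y < hi) s = dec (fun y => lo <= y < hi) s.
    by apply: eq_in_dec => y ys /=; rewrite lts.
  have -> : dec (fun y => t <= bump v y) s = dec (fun y => t <= y) s.
    by apply: eq_in_dec => y ys /=; rewrite lts.
  by [].
apply: count_pred0_in => s /perms_mem sP; rewrite Q_cons xt /=.
have xs : x \in s by rewrite sP; lia.
have -> : all (fun y => (t <= bump x y) ==> (bump x y < x)) s = false.
  apply/negbTE/allPn; exists x => //; rewrite bumpE leqnn; apply/negP => /implyP H.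
  suff: x.+1 < x by lia.
  by apply: H; lia.
by rewrite !andbF.
Qed.
Definition SE v t lo w := \sum_(0 <= x < lo) 'C(v+x, x) + (if 0 < w then 'C(v+lo, lo+w-1) else 0)
  + \sum_(lo+w <= x < t) 'C(v+x-w, x) + (if t <= v then 'C(v+t-w, t) else 0).
Definition SD v t lo w := \sum_(0 <= x < lo) 'C(v+x, v.+1) + (if 0 < w then 'C(v+lo, v.+1) else 0)
  + \sum_(lo+w <= x < t) 'C(v+x-w, v.+1) + (if t <= v then 'C(v+t-w, v.+1) else 0).

Lemma arith0 v w k : w + k <= v.+1 ->
  SE v (w + k) 0 w + 'C(v.+1 + (w + k) - w, v.+2) = 'C(v.+1 + (w+k) - w, w + k) + SD v (w + k) 0 w.
Proof.
elim: k => [|k IH] hk.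
  rewrite /SE /SD !addn0 !add0n !big_geq // !addnK !(bin_small (ltnSn _)).
  case: w hk => [|w] hk /=; first by rewrite !bin0.
  rewrite subn1 /= binS; case: (leqP w.+1 v) => h; first by lia.
  by rewrite (bin_small h); lia.
have hk' : w + k <= v.+1 by lia.
have := IH hk'; rewrite /SE /SD !add0n.
have -> : w + k.+1 = (w + k).+1 by lia.
rewrite (big_nat_recr _ _ _ (leq_addr k w)) (big_nat_recr _ _ _ (leq_addr k w)) /=.
have -> : v + (w + k) - w = v + k by lia.
have -> : v.+1 + (w + k) - w = (v + k).+1 by lia.
have -> : v + (w + k).+1 - w = (v + k).+1 by lia.
have -> : v.+1 + (w + k).+1 - w = (v + k).+2 by lia.
set M := v + k.
have e0 : 'C(M.+2, v.+2) = 'C(M.+1, v.+2) + 'C(M.+1, v.+1) by rewrite binS.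
have e1 : 'C(M.+2, (w+k).+1) = 'C(M.+1, (w+k).+1) + 'C(M.+1, w+k) by rewrite binS.
have e2 : 'C(M.+1, v.+1) = 'C(M, v.+1) + 'C(M, v) by rewrite binS.
have e3 : 'C(M.+1, (w+k).+1) = 'C(M, (w+k).+1) + 'C(M, w+k) by rewrite binS.
case: (ltnP (w + k) v) => h1.
  have h1' : w + k <= v by lia.
  rewrite h1'; lia.
have h1' : w + k = v by lia.
rewrite h1' in e1 e3 *; rewrite leqnn; lia.
Qed.

Lemma shift v t lo w : lo.+1 + w <= t -> t <= v.+1 ->
  SE v t lo.+1 w + SD v t lo w = SE v t lo w + SD v t lo.+1 w.
Proof.
move=> h1 h2; rewrite /SE /SD !big_nat_recr //= addSn.
rewrite (big_ltn (m := lo + w)) // (big_ltn (m := lo + w)) //.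
have -> : v + (lo + w) - w = v + lo by lia.
case: w h1 => [|w] h1.
  rewrite /= !addn0; lia.
have -> : lo.+1 + w.+1 - 1 = (lo + w).+1 by lia.
have -> : lo + w.+1 - 1 = lo + w by lia.
have -> : lo + w.+1 = (lo + w).+1 by lia.
rewrite /= addnS.
have e1 : 'C((v + lo).+1, (lo + w).+1) = 'C(v + lo, (lo + w).+1) + 'C(v + lo, lo + w) by rewrite binS.
have e2 : 'C((v + lo).+1, v.+1) = 'C(v + lo, v.+1) + 'C(v + lo, v) by rewrite binS.
have e3 : 'C(v + lo, lo) = 'C(v + lo, v).
  by have := @bin_sub (v + lo) v; rewrite addKn; apply; lia.
lia.
Qed.

Lemma arith v t lo w : lo + w <= t -> t <= v.+1 ->
  SE v t lo w + 'C(v.+1 + t - w, v.+2) = 'C(v.+1 + t - w, t) + SD v t lo w.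
Proof.
elim: lo => [|lo IH] h1 h2.
  have H := @arith0 v w (t - w); rewrite subnKC in H; last by lia.
  by rewrite H //; lia.
have := shift h1 h2; have := IH (ltnW h1) h2; lia.
Qed.

Lemma sum_single m n c F : m <= n -> n <= c.+1 -> \sum_(m <= x < n) (if x == c then F else 0) = (if c < n then (if m <= c then F else 0) else 0).
Proof.
move=> h1 h2; elim: n h1 h2 => [|n IH] h1 h2.
  by rewrite big_geq.
case: (ltnP m n.+1) => h3; last first.
  have -> : m = n.+1 by lia.
  by rewrite big_geq //; case: ifP => //; case: ifP => //; lia.
rewrite big_nat_recr //= IH; try lia.
case: (eqVneq n c) => [<-|nc]; first by rewrite ltnn ltnSn; case: ifP => //; lia.
have -> : (c < n) = (c < n.+1) by lia.
by rewrite addn0.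
Qed.

Lemma ltF m n : n <= m -> (m < n) = false.
Proof. by rewrite ltnNge => ->. Qed.

Lemma Nformula v t lo hi : lo <= hi -> hi <= t -> t <= v ->
  N v t lo hi + 'C(v + t - (hi - lo), v.+1) = 'C(v + t - (hi - lo), t).
Proof.
elim: v t lo hi => [|v IH] t lo hi h1 h2 h3.
  have -> : t = 0 by lia.
  have -> : hi = 0 by lia.
  have -> : lo = 0 by lia.
  by rewrite /N /=.
set w := hi - lo.
have -> : N v.+1 t lo hi = \sum_(0 <= x < v.+1)
  (if x < lo then N v x x x
   else if x < hi then (if x == hi.-1 then N v x lo x else 0)
   else if x < t then N v x lo hi
   else if x == v then N v t lo hi else 0).
  rewrite /N count_perms_peel; apply: eq_big_nat => x hx.
  by rewrite -/(N _ _ _ _) Nstep //; lia.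
rewrite (big_cat_nat _ (n := lo)) //; last by lia.
rewrite (big_cat_nat _ (m := lo) (n := hi)) //; last by lia.
rewrite (big_cat_nat _ (m := hi) (n := t)) //.
have e1 : \sum_(0 <= x < lo) (if x < lo then N v x x x
   else if x < hi then (if x == hi.-1 then N v x lo x else 0)
   else if x < t then N v x lo hi
   else if x == v then N v t lo hi else 0) + \sum_(0 <= x < lo) 'C(v+x, v.+1)
   = \sum_(0 <= x < lo) 'C(v+x, x).
  rewrite -big_split; apply: eq_big_nat => x hx /=.
  have xl : x < lo by lia.
  rewrite xl; have := IH x x x (leqnn _) (leqnn _) (_ : x <= v); rewrite subnn subn0.
  by apply; lia.
have e2 : \sum_(lo <= x < hi) (if x < lo then N v x x x
   else if x < hi then (if x == hi.-1 then N v x lo x else 0)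
   else if x < t then N v x lo hi
   else if x == v then N v t lo hi else 0)
   + (if 0 < w then 'C(v+lo, v.+1) else 0) = (if 0 < w then 'C(v+lo, lo+w-1) else 0).
  rewrite (@eq_big_nat _ _ _ lo hi _ (fun x => if x == hi.-1 then N v hi.-1 lo hi.-1 else 0));
    last by move=> x hx; rewrite ltnNge (proj1 (andP hx)) /= (proj2 (andP hx)); case: eqP => // ->.
  rewrite sum_single; try lia.
  case: (ltnP lo hi) => hlh; last first.
    have -> : w = 0 by rewrite /w; lia.
    by case: ifP => // ?; case: ifP => // ?; lia.
  have -> : hi.-1 < hi by lia.
  have -> : lo <= hi.-1 by lia.
  have -> : 0 < w by rewrite /w; lia.
  have := IH hi.-1 lo hi.-1 (_ : lo <= hi.-1) (leqnn _) (_ : hi.-1 <= v).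
  have -> : v + hi.-1 - (hi.-1 - lo) = v + lo by lia.
  have -> : lo + w - 1 = hi.-1 by rewrite /w; lia.
  by apply; lia.
have e3 : \sum_(hi <= x < t) (if x < lo then N v x x x
   else if x < hi then (if x == hi.-1 then N v x lo x else 0)
   else if x < t then N v x lo hi
   else if x == v then N v t lo hi else 0) + \sum_(lo + w <= x < t) 'C(v+x-w, v.+1)
   = \sum_(lo + w <= x < t) 'C(v+x-w, x).
  have -> : lo + w = hi by rewrite /w; lia.
  rewrite -big_split; apply: eq_big_nat => x hx /=.
  rewrite (@ltF x lo) ?(@ltF x hi); try lia.
  rewrite (proj2 (andP hx)); have := IH x lo hi h1 (_ : hi <= x) (_ : x <= v).
  by apply; lia.
have e4 : \sum_(t <= x < v.+1) (if x < lo then N v x x x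
   else if x < hi then (if x == hi.-1 then N v x lo x else 0)
   else if x < t then N v x lo hi
   else if x == v then N v t lo hi else 0) + (if t <= v then 'C(v+t-w, v.+1) else 0)
   = (if t <= v then 'C(v+t-w, t) else 0).
  rewrite (@eq_big_nat _ _ _ t v.+1 _ (fun x => if x == v then N v t lo hi else 0));
    last by move=> x hx; rewrite !ltF //; lia.
  rewrite sum_single // ltnSn; case: ifP => // htv.
  by apply: IH.
have hw : lo + w <= t by rewrite /w; lia.
have := @arith v t lo w hw h3; rewrite /SE /SD.
have -> : v.+1 + t - w = v.+1 + t - (hi - lo) by [].
move=> H; rewrite /=; lia.
Qed.

Lemma decP (P : pred nat) s : reflect
  (forall a b, a < b -> b < size s -> P (nth 0 s a) -> P (nth 0 s b) -> nth 0 s b < nth 0 s a)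
  (dec P s).
Proof.
elim: s => [|x s IH] /=; first by apply: ReflectT => a b ab; rewrite ltn0.
apply: (iffP andP).
  case=> /implyP H1 /IH H2 [|a] [|b] //= ab bs Pa Pb.
    by move/allP: (H1 Pa) => /(_ _ (mem_nth 0 bs)) /implyP; apply.
  by apply: H2.
move=> H; split.
  apply/implyP => Px; apply/allP => y ys; apply/implyP => Py.
  have := H 0 (index y s).+1 (ltn0Sn _); rewrite /= ltnS index_mem ys nth_index //.
  by apply.
by apply/IH => a b ab bs; apply: (H a.+1 b.+1).
Qed.

Lemma avP s : uniq s -> reflect
  (forall a b c, a < b -> b < c -> c < size s ->
     ~~ ((nth 0 s a < nth 0 s b) && (nth 0 s b < nth 0 s c)))
  (av s).
Proof.
elim: s => [|x s IH] /=; first by move=> _; apply: ReflectT => a b c _ _; rewrite ltn0.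
case/andP=> xs Us; apply: (iffP andP).
  case=> /decP H1 /(IH Us) H2 [|a] [|b] [|c] //= ab bc cs.
    apply/negP => /andP[h1 h2]; have := H1 b c bc cs h1 (ltn_trans h1 h2); lia.
  by apply: H2.
move=> H; split; last by apply/(IH Us) => a b c ab bc cs; apply: (H a.+1 b.+1 c.+1).
apply/decP => a b ab bs xa xb.
have := H 0 a.+1 b.+1 (ltn0Sn _) ab bs; rewrite /= xa /= -leqNgt leq_eqVlt.
case/orP => // /eqP E; move: (nth_uniq 0 (ltn_trans ab bs) bs Us); rewrite E eqxx.
by move/esym/eqP => abe; move: ab; rewrite abe ltnn.
Qed.
Lemma card_nth n (P : pred nat) s : size s = n ->
  #|[set y : 'I_n | P (nth 0 s y)]| = count P s.
Proof.
move=> Hs; rewrite cardsE cardE /enum_mem size_filter -enumT /=.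
have -> : count (fun y : 'I_n => P (nth 0 s y)) (enum 'I_n) = count P (map (fun y : 'I_n => nth 0 s y) (enum 'I_n)).
  by rewrite count_map.
have -> : map (fun y : 'I_n => nth 0 s y) (enum 'I_n) = s.
  by rewrite -[RHS](mkseq_nth 0) Hs /mkseq -val_enum_ord -map_comp.
by [].
Qed.
Lemma count_iota_int n a b : a <= b -> b <= n ->
  count (fun z => a <= z < b) (iota 0 n) = b - a.
Proof.
move=> ab bn.
have -> : iota 0 n = iota 0 a ++ iota a (b - a) ++ iota b (n - b).
  rewrite [in LHS](_ : n = a + ((b - a) + (n - b))); last by lia.
  by rewrite iotaD add0n iotaD subnKC.
rewrite !count_cat.
rewrite (@eq_in_count _ _ pred0) ?count_pred0; last by move=> z; rewrite mem_iota /=; lia.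
rewrite (@eq_in_count _ _ predT (iota a (b-a))) ?count_predT ?size_iota;
  last by move=> z; rewrite mem_iota /=; lia.
rewrite (@eq_in_count _ _ pred0 (iota b _)) ?count_pred0; last by move=> z; rewrite mem_iota /=; lia.
by rewrite addn0.
Qed.

Definition blk i p z := if z < i then z else if z < i + p then i else z - p + 1.

Lemma blk_mono i p z z' : 1 <= p -> z <= z' -> blk i p z <= blk i p z'.
Proof. rewrite /blk => hp h; case: (ltnP z i); case: (ltnP z' i); case: (ltnP z (i+p)); case: (ltnP z' (i+p)); lia. Qed.

Lemma blk_lt i p z n : 1 <= p -> i < n - p + 1 -> z < n -> blk i p z < n - p + 1.
Proof. rewrite /blk => hp hi hz; case: (ltnP z i); case: (ltnP z (i+p)); lia. Qed.

Lemma blk_eqi i p z : 1 <= p -> (blk i p z == i) = (i <= z < i + p).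
Proof.
rewrite /blk => hp; case: (ltnP z i) => h1; case: (ltnP z (i+p)) => h2;
  lia.
Qed.

Definition zof i p (j : nat) := if j < i then j else if j == i then i else j + p - 1.

Lemma blk_eqj i p z j : 1 <= p -> j != i -> (blk i p z == j) = (zof i p j <= z < (zof i p j).+1).
Proof.
move=> hp hji; rewrite /blk /zof (negbTE hji); case: (ltnP z i) => h1; case: (ltnP z (i+p)) => h2;
  case: (ltnP j i) => h3; move: hji; lia.
Qed.

Definition Psi n p i (s : seq nat) : (n - p + 1).-tuple {set 'I_n} :=
  [tuple [set y : 'I_n | blk i p (nth 0 s y) == j] | j < n - p + 1].

Lemma Psi_in n p (i : 'I_(n - p + 1)) s : 1 <= p -> p <= n ->
  s \in permutations (iota 0 n) -> Q n i (i + p) s -> (Psi n p i s, i) \in avoiders n p.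
Proof.
move=> hp hpn sP /and3P[avs _ decs].
have Ps := sP; rewrite mem_permutations in Ps.
have := Ps; rewrite perm_iota_eq => /and3P[Us _ /eqP Ss].
have Ms := perms_mem sP.
have nthlt : forall y : 'I_n, nth 0 s y < n by move=> y; rewrite -Ms mem_nth // Ss.
have hi : i < n - p + 1 := ltn_ord i.
rewrite inE /=; apply/and3P; split.
- rewrite /is_osp -andbA; apply/and3P; split.
  + apply/forallP => j; apply/set0Pn.
    have zn : zof i p j < n by rewrite /zof; have := ltn_ord j; have := ltn_ord i; case: (ltnP j i) => ?; case: (@eqP _ (nat_of_ord j) i) => ?; lia.
    have yn : index (zof i p j) s < n by move: (index_mem (zof i p j) s); rewrite Ms zn Ss => ->.
    exists (Ordinal yn); rewrite tnth_mktuple inE /= nth_index ?Ms //.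
    case: (eqVneq (nat_of_ord j) (nat_of_ord i)) => E.
      move/val_inj: E => E; subst j; rewrite blk_eqi // /zof ltnn eqxx; lia.
    by rewrite blk_eqj // leqnn ltnSn.
  + apply/forallP => j; apply/forallP => j'; apply/implyP => jj'.
    rewrite -setI_eq0; apply/eqP/setP => y; rewrite !inE !tnth_mktuple !inE.
    by apply/negbTE/negP => /andP[/eqP -> /eqP /val_inj E]; move: jj'; rewrite E eqxx.
  + apply/forallP => y; apply/existsP.
    exists (Ordinal (blk_lt hp hi (nthlt y))); by rewrite tnth_mktuple inE.
- apply/negP => /existsP[i1 /existsP[i2 /existsP[i3 /existsP[b1 /existsP[b2 /existsP[b3]]]]]].
  rewrite !tnth_mktuple !inE => /and5P[h12 h23 /eqP e1 /eqP e2 /andP[/eqP e3 /andP[hb12 hb23]]].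
  have lt : forall a b : 'I_n, blk i p (nth 0 s a) < blk i p (nth 0 s b) -> nth 0 s a < nth 0 s b.
    by move=> a b; apply: contraTT; rewrite -!leqNgt; apply: blk_mono.
  move/(avP Us): avs => /(_ b1 b2 b3 hb12 hb23); rewrite Ss ltn_ord => /(_ isT).
  by rewrite !lt // ?e1 ?e2 ?e3.
- apply/andP; split.
    rewrite tnth_mktuple (@card_nth n (fun z => blk i p z == i) s Ss).
    rewrite (eq_count (a2 := fun z => i <= z < i + p)); last first.
      by move=> z; rewrite blk_eqi.
    by rewrite (permP Ps) count_iota_int; lia.
  apply/forallP => j; apply/implyP => ji.
  have ji' : val j != val i by [].
  rewrite tnth_mktuple (@card_nth n (fun z => blk i p z == j) s Ss).
  rewrite (eq_count (a2 := fun z => zof i p j <= z < (zof i p j).+1)); last first.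
    by move=> z; rewrite blk_eqj.
  rewrite (permP Ps) count_iota_int //; first lia.
  by rewrite /zof; have := ltn_ord j; have := ltn_ord i; case: (ltnP j i) => ?; case: (@eqP _ (nat_of_ord j) i) => ?; lia.
Qed.

Lemma rank_formula n p i s : 1 <= p -> i + p <= n -> s \in permutations (iota 0 n) ->
  dec (fun y => i <= y < i + p) s -> forall y : 'I_n, i <= nth 0 s y < i + p ->
  nth 0 s y = i + #|[set z : 'I_n | (blk i p (nth 0 s z) == i) && (y < z)]|.
Proof.
move=> hp hin sP decs y hy.
have Ps := sP; rewrite mem_permutations in Ps.
have := Ps; rewrite perm_iota_eq => /and3P[Us _ /eqP Ss].
have Ms := perms_mem sP.
have nthlt : forall y : 'I_n, nth 0 s y < n by move=> z; rewrite -Ms mem_nth // Ss.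
have -> : [set z : 'I_n | (blk i p (nth 0 s z) == i) && (y < z)] =
          [set z : 'I_n | i <= nth 0 s z < nth 0 s y].
  apply/setP => z; rewrite !inE blk_eqi //; apply/idP/idP.
    case/andP=> hz yz; move/decP: decs => /(_ y z yz); rewrite Ss ltn_ord => /(_ isT hy hz).
    by move: hz => /andP[-> _].
  case/andP=> h1 h2; have hz : i <= nth 0 s z < i + p by lia.
  rewrite hz /=; case: (ltngtP y z) => // yz.
    by move/decP: decs => /(_ z y yz); rewrite Ss ltn_ord => /(_ isT hz hy); lia.
  by move/val_inj: yz => yz; move: h2; rewrite yz ltnn.
rewrite (@card_nth n (fun v => i <= v < nth 0 s y) s Ss) (permP Ps) count_iota_int; try lia.
Qed.

Lemma Psi_inj n p (i : 'I_(n - p + 1)) s s' : 1 <= p -> p <= n ->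
  s \in filter (Q n i (i + p)) (permutations (iota 0 n)) ->
  s' \in filter (Q n i (i + p)) (permutations (iota 0 n)) ->
  Psi n p i s = Psi n p i s' -> s = s'.
Proof.
move=> hp hpn; rewrite !mem_filter => /andP[/and3P[_ _ ds] sP] /andP[/and3P[_ _ ds'] sP'] E.
have hin : i + p <= n by have := ltn_ord i; lia.
have hi : i < n - p + 1 := ltn_ord i.
have := sP; rewrite mem_permutations perm_iota_eq => /and3P[_ _ /eqP Ss].
have := sP'; rewrite mem_permutations perm_iota_eq => /and3P[_ _ /eqP Ss'].
have nthlt : forall y : 'I_n, nth 0 s y < n by move=> z; rewrite -(perms_mem sP) mem_nth // Ss.
have nthlt' : forall y : 'I_n, nth 0 s' y < n by move=> z; rewrite -(perms_mem sP') mem_nth // Ss'.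
have G : forall y : 'I_n, blk i p (nth 0 s y) = blk i p (nth 0 s' y).
  move=> y; have := congr1 (fun B : (n - p + 1).-tuple {set 'I_n} => y \in tnth B (Ordinal (blk_lt hp hi (nthlt y)))) E.
  by rewrite /= !tnth_mktuple !inE eqxx => /esym/eqP.
apply: (@eq_from_nth _ 0); first by rewrite Ss Ss'.
move=> y; rewrite Ss => yn; pose y' := Ordinal yn; rewrite -[y]/(nat_of_ord y').
case: (eqVneq (blk i p (nth 0 s y')) i) => hb.
  have hw : i <= nth 0 s y' < i + p by rewrite -blk_eqi // hb.
  have hw' : i <= nth 0 s' y' < i + p by rewrite -blk_eqi // -G hb.
  rewrite (rank_formula hp hin sP ds hw) (rank_formula hp hin sP' ds' hw').
  by congr (_ + _); apply: eq_card => z; rewrite !inE G.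
have hb' : blk i p (nth 0 s' y') != i by rewrite -G.
have e1 := eqxx (blk i p (nth 0 s y')); rewrite {1}(blk_eqj (nth 0 s y') hp hb) in e1.
have e2 := eqxx (blk i p (nth 0 s' y')); rewrite {1}(blk_eqj (nth 0 s' y') hp hb') in e2.
rewrite -G in e2; lia.
Qed.

Lemma Psi_surj n p (i : 'I_(n - p + 1)) B : 1 <= p -> p <= n ->
  (B, i) \in avoiders n p ->
  exists2 s, s \in filter (Q n i (i + p)) (permutations (iota 0 n)) & B = Psi n p i s.
Proof.
move=> hp hpn; rewrite inE /= => /and3P[osp avd bt].
move: osp; rewrite /is_osp => /andP[/andP[/forallP ne /forallP dj] /forallP cv].
move: bt; rewrite /block_type_at => /andP[/eqP cBi /forallP c1].
set k := n - p + 1.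
have hi : i < k := ltn_ord i.
have hin : i + p <= n by rewrite /k in hi; lia.
pose fB (y : 'I_n) := find (fun A : {set 'I_n} => y \in A) B.
have fBlt : forall y, fB y < k.
  move=> y; have /existsP[j yj] := cv y.
  rewrite -[k](size_tuple B) -has_find; apply/hasP; exists (tnth B j) => //.
  exact: mem_tnth.
have key : forall y (j : 'I_k), (y \in tnth B j) = (fB y == j).
  move=> y j; have Hy : y \in tnth B (Ordinal (fBlt y)).
    rewrite (tnth_nth set0) /=; apply: (@nth_find _ set0 (fun A : {set 'I_n} => y \in A)).
    by rewrite has_find size_tuple fBlt.
  apply/idP/eqP => [yj|E]; last first.
    by have -> : j = Ordinal (fBlt y) by apply: val_inj; rewrite /= E.
  apply/eqP; apply: contraT => nj.
  have := dj (Ordinal (fBlt y)); move/forallP => /(_ j); rewrite -(inj_eq val_inj) /= nj /=.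
  by rewrite -setI_eq0 => /eqP /setP /(_ y); rewrite !inE Hy yj.
have one : forall (j : 'I_k) a b, j != i -> a \in tnth B j -> b \in tnth B j -> a = b.
  move=> j a b ji ha hb; have := c1 j; rewrite ji /= => /cards1P[x Ex].
  by move: ha hb; rewrite Ex !inE => /eqP -> /eqP ->.
pose rank (y : 'I_n) := #|[set z in tnth B i | y < z]|.
have rank_lt : forall y, y \in tnth B i -> rank y < p.
  move=> y yi; rewrite -cBi; apply: proper_card; apply/properP; split.
    by apply/subsetP => z; rewrite inE => /andP[].
  by exists y => //; rewrite inE ltnn andbF.
have rank_dec : forall a b : 'I_n, a \in tnth B i -> b \in tnth B i -> a < b -> rank b < rank a.
  move=> a b ai bi ab; apply: proper_card; apply/properP; split.
    by apply/subsetP => z; rewrite !inE => /andP[-> bz]; rewrite (ltn_trans ab bz).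
  by exists b; rewrite !inE ?bi ?ab // ltnn andbF.
pose sig (y : 'I_n) := if fB y < i then fB y else if fB y == i then i + rank y else fB y + p - 1.
have inBi : forall y, (y \in tnth B i) = (fB y == i) by move=> y; rewrite key.
have sig_lt : forall a b : 'I_n, fB a < fB b -> sig a < sig b.
  move=> a b ab; rewrite /sig.
  case: (ltnP (fB a) i) => h1; case: (ltnP (fB b) i) => h2;
  case: (eqVneq (fB a) i) => h3; case: (eqVneq (fB b) i) => h4; try lia.
  have := rank_lt a; rewrite inBi h3 => /(_ (eqxx _)); lia.
have sig_same : forall a b : 'I_n, fB a = fB b -> a < b -> fB a = i /\ sig b < sig a.
  move=> a b ab lab.
  case: (eqVneq (fB a) i) => h.
    split => //; rewrite /sig -ab h ltnn eqxx ltn_add2l; apply: rank_dec => //.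
      by rewrite inBi h.
    by rewrite inBi -ab h.
  have ha : a \in tnth B (Ordinal (fBlt a)) by rewrite key.
  have hb : b \in tnth B (Ordinal (fBlt a)) by rewrite key /= ab.
  have := one _ _ _ (_ : Ordinal (fBlt a) != i) ha hb.
  by move=> /(_ h) E; move: lab; rewrite E ltnn.
have sig_inj : injective sig.
  move=> a b E; case: (ltngtP a b) => ab.
  - case: (ltngtP (fB a) (fB b)) => h.
    + by have := sig_lt _ _ h; rewrite E ltnn.
    + by have := sig_lt _ _ h; rewrite E ltnn.
    + by have [_] := sig_same _ _ h ab; rewrite E ltnn.
  - case: (ltngtP (fB a) (fB b)) => h.
    + by have := sig_lt _ _ h; rewrite E ltnn.
    + by have := sig_lt _ _ h; rewrite E ltnn.
    + by have [_] := sig_same _ _ (esym h) ab; rewrite E ltnn.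
  - exact: val_inj.
have sig_n : forall y, sig y < n.
  move=> y; rewrite /sig; have := fBlt y; rewrite /k.
  case: (ltnP (fB y) i) => h1; case: (eqVneq (fB y) i) => h2; try lia.
  have := rank_lt y; rewrite inBi h2 => /(_ (eqxx _)); lia.
have blk_sig : forall y, blk i p (sig y) = fB y.
  move=> y; rewrite /sig /blk; have := fBlt y; rewrite /k.
  case: (ltnP (fB y) i) => h1; first by rewrite h1.
  case: (eqVneq (fB y) i) => h2.
    have := rank_lt y; rewrite inBi h2 => /(_ (eqxx _)) => hr.
    by move=> _; rewrite ltnNge leq_addr /= ltn_add2l hr.
  case: (ltnP (fB y + p - 1) i) => ?; case: (ltnP (fB y + p - 1) (i + p)) => ?; move: h2; lia.
have c4 : forall a b : 'I_n, a < b -> sig a < sig b -> fB a < fB b.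
  move=> a b ab sab; case: (ltngtP (fB a) (fB b)) => // h.
    by have := sig_lt _ _ h; lia.
  by have [_] := sig_same _ _ h ab; lia.
pose s := map sig (enum 'I_n).
have nth0 : forall y : 'I_n, nth 0 s y = sig y.
  by move=> y; rewrite (nth_map y) ?size_enum_ord // nth_ord_enum.
have Ss : size s = n by rewrite size_map size_enum_ord.
have Us : uniq s by rewrite map_inj_uniq ?enum_uniq.
exists s.
  rewrite mem_filter mem_permutations perm_iota_eq Us Ss eqxx andbT.
  have -> : all (fun y => y < n) s by apply/allP => z /mapP[y _ ->].
  rewrite !andbT /Q; apply/and3P; split.
  - apply/(avP Us) => a b c ab bc; rewrite Ss => cn.
    have an : a < n by lia.
    have bn : b < n by lia.
    rewrite -[a]/(nat_of_ord (Ordinal an)) -[b]/(nat_of_ord (Ordinal bn)).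
    rewrite -[c]/(nat_of_ord (Ordinal cn)) !nth0.
    apply/negP => /andP[h1 h2].
    have f1 := c4 (Ordinal an) (Ordinal bn) ab h1; have f2 := c4 (Ordinal bn) (Ordinal cn) bc h2.
    move/negP: avd; apply; apply/existsP; exists (Ordinal (fBlt (Ordinal an))).
    apply/existsP; exists (Ordinal (fBlt (Ordinal bn))).
    apply/existsP; exists (Ordinal (fBlt (Ordinal cn))).
    apply/existsP; exists (Ordinal an); apply/existsP; exists (Ordinal bn).
    apply/existsP; exists (Ordinal cn).
    by rewrite /= f1 f2 !key /= !eqxx ab bc.
  - by apply: dec_none => y /mapP[z _ ->]; rewrite -ltnNge.
  - apply/decP => a b ab; rewrite Ss => bn.
    have an : a < n by lia.
    rewrite -[a]/(nat_of_ord (Ordinal an)) -[b]/(nat_of_ord (Ordinal bn)) !nth0.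
    rewrite -!blk_eqi // !blk_sig => /eqP ha /eqP hb.
    by have [] := sig_same (Ordinal an) (Ordinal bn) (etrans ha (esym hb)) ab.
apply: eq_from_tnth => j; rewrite tnth_mktuple; apply/setP => y.
by rewrite inE nth0 blk_sig key.
Qed.

Lemma card_Ai n p (i : 'I_(n - p + 1)) : 1 <= p -> p <= n ->
  #|[set B | (B, i) \in avoiders n p]| = N n n i (i + p).
Proof.
move=> hp hpn.
set F := filter (Q n i (i + p)) (permutations (iota 0 n)).
have E : [set B | (B, i) \in avoiders n p] =i map (Psi n p i) F.
  move=> B; rewrite inE; apply/idP/mapP.
    by case/(Psi_surj hp hpn) => s sF ->; exists s.
  case=> s sF ->; move: (sF); rewrite mem_filter => /andP[qs sP].
  exact: Psi_in.
have U : uniq (map (Psi n p i) F).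
  rewrite map_inj_in_uniq; first by rewrite filter_uniq // permutations_uniq.
  by move=> s s' hs hs'; apply: Psi_inj.
rewrite (eq_card E); move/card_uniqP: U => ->.
by rewrite size_map size_filter.
Qed.

Lemma card_split n p : #|avoiders n p| = \sum_(i : 'I_(n - p + 1)) #|[set B | (B, i) \in avoiders n p]|.
Proof.
rewrite -sum1_card (partition_big snd xpredT) //=.
apply: eq_bigr => j _; rewrite sum1dep_card.
have -> : [set x | (x \in avoiders n p) && (x.2 == j)] =
          (fun B => (B, j)) @: [set B | (B, j) \in avoiders n p].
  apply/setP => -[B j']; rewrite !inE; apply/idP/imsetP.
    by case/andP=> h /eqP /= E; subst j'; exists B; rewrite ?inE.
  by case=> B' h [-> ->]; move: h; rewrite !inE /= eqxx andbT.
by rewrite card_imset // => a b [].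
Qed.

Unset Implicit Arguments.
Theorem theorem6 (n p : nat) (hp : 1 <= p) (hnp : p < n) :
  #|avoiders n p| =
    ((n - p + 1) * (p + 1) * 'C(2 * n - p, n - p)) %/ (n + 1).
Proof.
have hpn : p <= n by apply: ltnW.
have F0 := @Nformula n n 0 p (leq0n _) hpn (leqnn _).
rewrite subn0 in F0.
have HK : forall i : 'I_(n - p + 1), #|[set B | (B, i) \in avoiders n p]| = N n n 0 p.
  move=> i; rewrite card_Ai //.
  have hi := ltn_ord i.
  have Fi := @Nformula n n i (i + p) (leq_addr _ _) (_ : i + p <= n) (leqnn _).
  rewrite addKn in Fi; have /Fi {}Fi : i + p <= n by lia.
  lia.
rewrite card_split (eq_bigr _ (fun i _ => HK i)) sum_nat_const card_ord.
set M := n + n - p in F0.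
have -> : 2 * n - p = M by rewrite /M; lia.
have e1 := mul_bin_left M n.
have e2 : 'C(M, n - p) = 'C(M, n).
  by rewrite -[in RHS](@bin_sub M n) ?/M; [congr 'C(_, _); lia | lia].
rewrite e2.
have -> : (n - p + 1) * (p + 1) * 'C(M, n) = (n - p + 1) * N n n 0 p * (n + 1).
  rewrite -!mulnA; congr (_ * _).
  have E3 : M - n = n - p by rewrite /M; lia.
  rewrite E3 in e1.
  move: e1; rewrite -F0; nia.
by rewrite mulnK // addn1.
Qed.
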